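(* (Descent lemma.) Suppose $\theta$ is $\varepsilon_0$-close to $\mathcal{S}$ in the $P$-norm. Let $\theta^{\star}$ denote the projection of $\theta$ onto $\mathcal{S}$ in the $P$-norm and $\Delta=\theta-\theta^{\star}$. Then $$Q(\theta) - Q^{\star} \le \frac{\sqrt{\beta}}{2}\|\Delta\|_P^2,$$ where $Q^{\star}$ is the minimum value of $Q$.
   Context: Covariates $x\sim\mathcal{N}(0,\Sigma)$ with $\Sigma$ full rank, responses $y=Mx+z$, $z\sim\mathcal{N}(0,\Omega)$; $p\ge d$, $M\Sigma^{1/2}$ full column rank. $\theta=(A,B)$, $A\in\mathbb{R}^{p\times d}$, $B\in\mathbb{R}^{d\times d}$. Population loss $L(\theta)=\frac12\mathrm{Tr}(\Omega)+\frac12\|A\Sigma B^{\top}\Sigma^{1/2}-M\Sigma^{1/2}\|_F^2$ (closed form of the population loss of softmax self-attention), $R(\theta)=\frac18\|\Sigma^{1/2}(A^{\top}A-B^{\top}\Sigma B)\Sigma^{1/2}\|_F^2$, $Q=L+R$. With $U\Gamma V^{\top}$ an SVD of $M\Sigma^{1/2}$, $\mathcal{S}=\{(U\Gamma^{1/2}J^{\top}\Sigma^{-1/2};\ \Sigma^{-1/2}V\Gamma^{1/2}J^{\top}\Sigma^{-1/2}):J\in\mathbb{O}_d\}$ (the set of global minimizers of $Q$). $P=\mathrm{diag}(I_p,\Sigma)$, $\langle\theta_1,\theta_2\rangle_P=\mathrm{Tr}(\theta_1^{\top}P\theta_2)$. $K_0=2\sigma_d(M\Sigma^{1/2})\sigma_d(\Sigma)$,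 $K_1=2\sigma_1(M\Sigma^{1/2})\sigma_1(\Sigma)$, $\varepsilon_0=\min\left(1,\frac{\sqrt{K_0}}{\sqrt{3K_1\|\Sigma\|_{\mathrm{op}}}},\frac{(K_0/2)^{1/4}}{\sqrt{\|\Sigma\|_{\mathrm{op}}}}\right)$, $\beta=(14+7\kappa^2(\Sigma))K_1^2+21\|\Sigma\|_{\mathrm{op}}^2K_1+7\|\Sigma\|_{\mathrm{op}}^4$. Within $P$-distance $\varepsilon_0$ of $\mathcal{S}$ the one-point smoothness bound $\|P^{-1}\nabla Q(\theta)\|_P^2\le\beta\|\theta-\theta^{\star}\|_P^2$ holds. *)

(* Defs.v *)
From mathcomp Require Import all_boot all_order all_algebra.
Set Implicit Arguments. Unset Strict Implicit. Unset Printing Implicit Defensive.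
Import Order.TTheory GRing.Theory Num.Theory.
Local Open Scope ring_scope.

Section Defs.
Variable R : rcfType.

Definition frob2 m n (X : 'M[R]_(m, n)) : R := \tr (X^T *m X).

Definition orthonormal_cols m n (U : 'M[R]_(m, n)) : Prop := U^T *m U = 1%:M.

Definition psd_sym n (X : 'M[R]_n) : Prop :=
  X^T = X /\ forall v : 'cV[R]_n, 0 <= (v^T *m X *m v) 0 0.

(* Sigma^{1/2} built from an eigendecomposition Sigma = W diag(lam) W^T *)
Definition mx_sqrt_eig n (W : 'M[R]_n) (lam : 'rV[R]_n) : 'M[R]_n :=
  W *m diag_mx (map_mx Num.sqrt lam) *m W^T.

Definition vmax n (v : 'rV[R]_n) : R := \big[Num.max/0]_(i < n) v 0 i.
Definition vmin n (v : 'rV[R]_n) : R := \big[Num.min/vmax v]_(i < n) v 0 i.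

(* P = diag(I_p, Sigma); <th1, th2>_P = Tr(th1^T P th2), th = (A; B) stacked *)
Definition Pmat p d (Sigma : 'M[R]_d) : 'M[R]_(p + d) := block_mx 1%:M 0 0 Sigma.
Definition Pnorm2 p d (Sigma : 'M[R]_d) (A : 'M[R]_(p, d)) (B : 'M[R]_d) : R :=
  \tr ((col_mx A B)^T *m Pmat p Sigma *m col_mx A B).

(* population loss L, regularizer R, Q = L + R; Sh = Sigma^{1/2} *)
Definition Lpop p d (Sigma Sh : 'M[R]_d) (M : 'M[R]_(p, d)) (Omega : 'M[R]_p)
    (A : 'M[R]_(p, d)) (B : 'M[R]_d) : R :=
  2^-1 * \tr Omega + 2^-1 * frob2 (A *m Sigma *m B^T *m Sh - M *m Sh).
Definition Rreg p d (Sigma Sh : 'M[R]_d) (A : 'M[R]_(p, d)) (B : 'M[R]_d) : R :=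
  8^-1 * frob2 (Sh *m (A^T *m A - B^T *m Sigma *m B) *m Sh).
Definition Qobj p d (Sigma Sh : 'M[R]_d) (M : 'M[R]_(p, d)) (Omega : 'M[R]_p)
    (A : 'M[R]_(p, d)) (B : 'M[R]_d) : R :=
  Lpop Sigma Sh M Omega A B + Rreg Sigma Sh A B.

(* the set S of global minimizers, given an SVD U diag(g) V^T of M Sigma^{1/2} *)
Definition Sset p d (Sh : 'M[R]_d) (U : 'M[R]_(p, d)) (g : 'rV[R]_d) (V : 'M[R]_d)
    (A : 'M[R]_(p, d)) (B : 'M[R]_d) : Prop :=
  let Gh := diag_mx (map_mx Num.sqrt g) in
  let Shi := invmx Sh in
  exists J : 'M[R]_d, orthonormal_cols J /\
    A = U *m Gh *m J^T *m Shi /\ B = Shi *m V *m Gh *m J^T *m Shi.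

End Defs.

(* Main.v *)
Require Import Defs.
From mathcomp Require Import all_boot all_order all_algebra.
From mathcomp Require Import ring lra.
Import Order.TTheory GRing.Theory Num.Theory.
Set Implicit Arguments. Unset Strict Implicit. Unset Printing Implicit Defensive.
Local Open Scope ring_scope.

Lemma ag1 (V : zmodType) (a b c e : V) : a + b + (c + e) - a = c + b + e.
Proof. by rewrite addrAC (addrAC a) subrr add0r addrA (addrC b c). Qed.
Lemma ag2 (V : zmodType) (Y a b c p q r : V) :
  Y + a + (b + c) - (Y + p + (q + r)) = a + b + c - (p + q + r).
Proof. by rewrite -(addrA Y p) opprD addrACA (addrAC Y) subrr add0r !addrA. Qed.

Section Frob.
Variable R : rcfType.

Definition ip m n (X Y : 'M[R]_(m, n)) : R := \tr (X^T *m Y).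

Lemma ipE m n (X Y : 'M[R]_(m, n)) : ip X Y = \sum_i \sum_j X i j * Y i j.
Proof.
rewrite /ip /mxtrace exchange_big /=; apply: eq_bigr => j _.
by rewrite mxE; apply: eq_bigr => i _; rewrite mxE.
Qed.

Lemma frob2_ip m n (X : 'M[R]_(m, n)) : frob2 X = ip X X.
Proof. by []. Qed.

Lemma frob2E m n (X : 'M[R]_(m, n)) : frob2 X = \sum_i \sum_j X i j ^+ 2.
Proof. by rewrite frob2_ip ipE; apply: eq_bigr => i _; apply: eq_bigr => j _; rewrite expr2. Qed.

Lemma frob2_ge0 m n (X : 'M[R]_(m, n)) : 0 <= frob2 X.
Proof. by rewrite frob2E; apply: sumr_ge0 => i _; apply: sumr_ge0 => j _; apply: sqr_ge0. Qed.

Lemma ipC m n (X Y : 'M[R]_(m, n)) : ip X Y = ip Y X.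
Proof. by rewrite !ipE; apply: eq_bigr => i _; apply: eq_bigr => j _; rewrite mulrC. Qed.

Lemma ipDl m n (X Y Z : 'M[R]_(m, n)) : ip (X + Y) Z = ip X Z + ip Y Z.
Proof. by rewrite !ipE -big_split; apply: eq_bigr => i _; rewrite -big_split; apply: eq_bigr => j _; rewrite mxE mulrDl. Qed.

Lemma ipZl m n a (X Y : 'M[R]_(m, n)) : ip (a *: X) Y = a * ip X Y.
Proof. by rewrite !ipE mulr_sumr; apply: eq_bigr => i _; rewrite mulr_sumr; apply: eq_bigr => j _; rewrite mxE mulrA. Qed.

Lemma ipNl m n (X Y : 'M[R]_(m, n)) : ip (- X) Y = - ip X Y.
Proof. by rewrite -scaleN1r ipZl mulN1r. Qed.

Lemma ipDr m n (X Y Z : 'M[R]_(m, n)) : ip Z (X + Y) = ip Z X + ip Z Y.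
Proof. by rewrite ipC ipDl !(ipC Z). Qed.
Lemma ipZr m n a (X Y : 'M[R]_(m, n)) : ip Y (a *: X) = a * ip Y X.
Proof. by rewrite ipC ipZl ipC. Qed.
Lemma ipNr m n (X Y : 'M[R]_(m, n)) : ip Y (- X) = - ip Y X.
Proof. by rewrite ipC ipNl ipC. Qed.

Lemma frob2D m n (X Y : 'M[R]_(m, n)) : frob2 (X + Y) = frob2 X + 2 * ip X Y + frob2 Y.
Proof. rewrite !frob2_ip ipDl !ipDr (ipC Y X); ring. Qed.

Lemma frob2N m n (X : 'M[R]_(m, n)) : frob2 (- X) = frob2 X.
Proof. by rewrite !frob2_ip ipNl ipNr opprK. Qed.

Lemma frob2Z m n a (X : 'M[R]_(m, n)) : frob2 (a *: X) = a ^+ 2 * frob2 X.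
Proof. by rewrite !frob2_ip ipZl ipZr mulrA expr2. Qed.

Lemma CS m n (X Y : 'M[R]_(m, n)) : ip X Y ^+ 2 <= frob2 X * frob2 Y.
Proof.
set a := frob2 X; set b := frob2 Y; set c := ip X Y.
have ha : 0 <= a := frob2_ge0 X. have hb : 0 <= b := frob2_ge0 Y.
have h1 : 0 <= a * (a * b - c ^+ 2).
  have := frob2_ge0 (a *: Y - c *: X).
  rewrite frob2D frob2N frob2Z ipNr !ipZl !ipZr -/a -/b -/c (ipC Y X) -/c.
  by rewrite frob2Z -/a; move=> h; nra.
have h2 : 0 <= b * (a * b - c ^+ 2).
  have := frob2_ge0 (b *: X - c *: Y).
  rewrite frob2D frob2N frob2Z ipNr !ipZl !ipZr -/a -/b -/c.
  by rewrite frob2Z -/b; move=> h; nra.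
have h3 := frob2_ge0 (X - Y). have h4 := frob2_ge0 (X + Y).
rewrite frob2D frob2N ipNr -/a -/b -/c in h3.
rewrite frob2D -/a -/b -/c in h4.
have [a0|a0] := eqVneq a 0.
  have [b0|b0] := eqVneq b 0.
    have -> : c = 0 by rewrite a0 b0 in h3 h4; lra.
    by rewrite a0 b0; lra.
  have bp : 0 < b by rewrite lt_def b0 hb.
  by rewrite -subr_ge0; rewrite pmulr_rge0 in h2.
have ap : 0 < a by rewrite lt_def a0 ha.
by rewrite -subr_ge0; rewrite pmulr_rge0 in h1.
Qed.


Lemma frob2_tr m n (X : 'M[R]_(m, n)) : frob2 X^T = frob2 X.
Proof. by rewrite /frob2 trmxK mxtrace_mulC. Qed.

Lemma frob2_mulr_orth m n k (X : 'M[R]_(m, n)) (V : 'M[R]_(k, n)) :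
  V^T *m V = 1%:M -> frob2 (X *m V^T) = frob2 X.
Proof.
move=> hV; rewrite /frob2 trmx_mul trmxK mxtrace_mulC -!mulmxA (mulmxA V^T) hV mul1mx.
by rewrite mxtrace_mulC.
Qed.

Lemma frob2_mull_orth m n k (X : 'M[R]_(n, m)) (U : 'M[R]_(k, n)) :
  U^T *m U = 1%:M -> frob2 (U *m X) = frob2 X.
Proof.
by move=> hU; rewrite /frob2 trmx_mul -mulmxA (mulmxA U^T) hU mul1mx.
Qed.

Lemma frob2_proj m n k (X : 'M[R]_(k, m)) (Y : 'M[R]_(k, n)) :
  Y^T *m Y = 1%:M -> frob2 (Y^T *m X) <= frob2 X.
Proof.
move=> hY; set P := Y *m Y^T.
have PT : P^T = P by rewrite /P trmx_mul trmxK.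
have PP : P *m P = P by rewrite /P mulmxA -(mulmxA Y) hY mulmx1.
have -> : frob2 (Y^T *m X) = frob2 (P *m X).
  by rewrite /P -mulmxA (frob2_mull_orth _ hY).
have hX : X = P *m X + (X - P *m X) by rewrite addrC subrK.
have h0 : ip (P *m X) (X - P *m X) = 0.
  rewrite /ip trmx_mul PT mulmxBr !mulmxA -(mulmxA _ Y^T Y) hY mulmx1 subrr.
  by rewrite mxtrace0.
rewrite [in X in _ <= X]hX frob2D h0 mulr0 addr0 lerDl; exact: frob2_ge0.
Qed.

Lemma frob2_diag m n (X : 'M[R]_(m, n)) (c : 'rV[R]_n) (k : R) :
  (forall j, c 0 j ^+ 2 <= k) -> frob2 (X *m diag_mx c) <= k * frob2 X.
Proof.
move=> hc; rewrite !frob2E mulr_sumr; apply: ler_sum => i _.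
rewrite mulr_sumr; apply: ler_sum => j _; rewrite mul_mx_diag mxE exprMn mulrC.
by apply: ler_wpM2r; [exact: sqr_ge0 | exact: hc].
Qed.

Lemma frob2_mul m n k (X : 'M[R]_(m, n)) (Y : 'M[R]_(n, k)) :
  frob2 (X *m Y) <= frob2 X * frob2 Y.
Proof.
have e1 : forall i l, (X *m Y) i l = ip (row i X) (col l Y)^T.
  move=> i l; rewrite ipE big_ord1 mxE; apply: eq_bigr => j _.
  by rewrite !mxE.
have rX : forall i, frob2 (row i X) = \sum_j X i j ^+ 2.
  by move=> i; rewrite frob2E big_ord1; apply: eq_bigr => j _; rewrite mxE.
have cY : forall l, frob2 (col l Y)^T = \sum_j Y j l ^+ 2.
  by move=> l; rewrite frob2E big_ord1; apply: eq_bigr => j _; rewrite !mxE.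
rewrite (frob2E (X *m Y)) (frob2E X) (frob2E Y) mulr_suml.
apply: ler_sum => i _.
rewrite exchange_big /= mulr_sumr; apply: ler_sum => l _.
by rewrite e1 -rX -cY; exact: CS.
Qed.

Definition nrm m n (X : 'M[R]_(m, n)) := Num.sqrt (frob2 X).

Lemma nrm_ge0 m n (X : 'M[R]_(m, n)) : 0 <= nrm X.
Proof. exact: sqrtr_ge0. Qed.

Lemma nrm_sq m n (X : 'M[R]_(m, n)) : nrm X ^+ 2 = frob2 X.
Proof. by rewrite sqr_sqrtr // frob2_ge0. Qed.

Lemma nrmD m n (X Y : 'M[R]_(m, n)) : nrm (X + Y) <= nrm X + nrm Y.
Proof.
have h := CS X Y; rewrite -!nrm_sq in h.
have h1 := nrm_sq (X + Y); rewrite frob2D -!nrm_sq in h1.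
have a0 := nrm_ge0 X; have b0 := nrm_ge0 Y; have c0 := nrm_ge0 (X + Y).
have hi : ip X Y <= nrm X * nrm Y.
  set t := nrm X * nrm Y; have t0 : 0 <= t by rewrite mulr_ge0.
  rewrite leNgt; apply/negP => H.
  have H1 : t * t < ip X Y * ip X Y.
    apply: (le_lt_trans (y := t * ip X Y)); first by rewrite ler_wpM2l // ltW.
    by rewrite ltr_pM2r // (le_lt_trans t0 H).
  rewrite -exprMn -/t !expr2 in h; lra.
nra.
Qed.


Lemma nrmN m n (X : 'M[R]_(m, n)) : nrm (- X) = nrm X.
Proof. by rewrite /nrm frob2N. Qed.

Lemma nrmB m n (X Y : 'M[R]_(m, n)) : nrm (X - Y) <= nrm X + nrm Y.
Proof. by rewrite -(nrmN Y) nrmD. Qed.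

Lemma nrm_le m n m' n' (X : 'M[R]_(m, n)) (Y : 'M[R]_(m', n')) k :
  0 <= k -> frob2 X <= k * frob2 Y -> nrm X <= Num.sqrt k * nrm Y.
Proof. by move=> k0 h; rewrite /nrm -sqrtrM // ler_wsqrtr. Qed.

Lemma final_ineq (sg s a b oS fA fB kap K1 beta : R) :
  0 <= sg -> s ^+ 2 = sg -> 0 <= s -> 0 <= a -> 0 <= b -> 0 <= oS ->
  0 <= fA -> 0 <= fB -> a ^+ 2 <= oS * fA -> b ^+ 2 <= oS * fB -> fA + fB <= 1 ->
  K1 = 2 * sg * oS ->
  beta = (14 + 7 * kap ^+ 2) * K1 ^+ 2 + 21 * oS ^+ 2 * K1 + 7 * oS ^+ 4 ->
  2^-1 * (s * a + s * b + a * b) ^+ 2 +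
  8^-1 * ((s * a + s * a + a ^+ 2) + (s * b + s * b + b ^+ 2)) ^+ 2
  <= Num.sqrt beta / 2 * (fA + fB).
Proof.
move=> sg0 hs s0 a0 b0 o0 fA0 fB0 ha hb hD hK1 hbeta.
set D := fA + fB. set mm := oS * D.
have D0 : 0 <= D by rewrite addr_ge0.
have m0 : 0 <= mm by rewrite mulr_ge0.
have hab : a ^+ 2 + b ^+ 2 <= mm by rewrite /mm /D mulrDr; lra.
have hq := sqr_ge0 (a - b).
have ht : (a + b) ^+ 2 <= 2 * mm.
  by rewrite !expr2 in hq hab *; nra.
have hp : a * b <= mm / 2.
  by rewrite !expr2 in hq hab *; nra.
have hp0 : 0 <= a * b by rewrite mulr_ge0.
have t0 : 0 <= a + b by rewrite addr_ge0.
have e1 : s * a + s * b + a * b = s * (a + b) + a * b by ring.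
have e2 : (s * a + s * a + a ^+ 2) + (s * b + s * b + b ^+ 2) =
          2 * (s * (a + b)) + (a ^+ 2 + b ^+ 2) by ring.
rewrite e1 e2.
have st2 : (s * (a + b)) ^+ 2 <= sg * (2 * mm).
  by rewrite exprMn hs ler_wpM2l.
have T1 : (s * (a + b) + a * b) ^+ 2 <= 3 * sg * mm + 3 / 4 * mm ^+ 2.
  have q : (s * (a + b) + a * b) ^+ 2 <= 3 / 2 * (s * (a + b)) ^+ 2 + 3 * (a * b) ^+ 2.
    set x := s * (a + b); set y := a * b.
    have : 0 <= (x - 2 * y) ^+ 2 by apply: sqr_ge0.
    move=> h; rewrite !expr2 in h *; nra.
  have q2 : (a * b) ^+ 2 <= (mm / 2) ^+ 2 by rewrite ler_pXn2r // nnegrE; lra.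
  have : (mm / 2) ^+ 2 = mm ^+ 2 / 4 by rewrite expr2; field.
  move=> e; lra.
have T2 : (2 * (s * (a + b)) + (a ^+ 2 + b ^+ 2)) ^+ 2 <= 12 * sg * mm + 3 * mm ^+ 2.
  have q : (2 * (s * (a + b)) + (a ^+ 2 + b ^+ 2)) ^+ 2 <=
      3 / 2 * (2 * (s * (a + b))) ^+ 2 + 3 * (a ^+ 2 + b ^+ 2) ^+ 2.
    set x := 2 * (s * (a + b)); set y := a ^+ 2 + b ^+ 2.
    have : 0 <= (x - 2 * y) ^+ 2 by apply: sqr_ge0.
    move=> h; rewrite !expr2 in h *; nra.
  have q2 : (a ^+ 2 + b ^+ 2) ^+ 2 <= mm ^+ 2.
    by rewrite ler_pXn2r // nnegrE addr_ge0 // sqr_ge0.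
  have e : (2 * (s * (a + b))) ^+ 2 = 4 * (s * (a + b)) ^+ 2 by rewrite exprMn; ring.
  lra.
have mD : mm ^+ 2 <= oS ^+ 2 * D.
  rewrite /mm exprMn ler_wpM2l ?sqr_ge0 //.
  have D1 : D <= 1 by [].
  by rewrite expr2; nra.
have hb2 : 3 * K1 + 3 / 2 * oS ^+ 2 <= Num.sqrt beta.
  have z : 0 <= 3 * K1 + 3 / 2 * oS ^+ 2.
    have := sqr_ge0 oS; have := mulr_ge0 sg0 o0; rewrite hK1; nra.
  rewrite -(ger0_norm z) -sqrtr_sqr ler_wsqrtr //.
  have k0 : 0 <= kap ^+ 2 by apply: sqr_ge0.
  have K0 : 0 <= K1 by rewrite hK1 !mulr_ge0.
  have o2 : 0 <= oS ^+ 2 by apply: sqr_ge0.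
  rewrite hbeta; set o := oS ^+ 2.
  have -> : oS ^+ 4 = o ^+ 2 by rewrite /o -exprM.
  have : 0 <= kap ^+ 2 * K1 ^+ 2 by rewrite mulr_ge0 ?sqr_ge0.
  have : 0 <= o * K1 by rewrite mulr_ge0.
  move=> h1 h2; rewrite !expr2 in h1 h2 *; nra.
have hmm : mm = oS * D by [].
have fin : 3 * sg * mm <= 3 / 2 * K1 * D by rewrite hmm hK1; lra.
nra.
Qed.


Lemma orth_sq n (J : 'M[R]_n) : J^T *m J = 1%:M -> J *m J^T = 1%:M.
Proof. exact: mulmx1C. Qed.

Lemma frob2_mulr_sq m n (X : 'M[R]_(m, n)) (J : 'M[R]_n) :
  J^T *m J = 1%:M -> frob2 (X *m J) = frob2 X.
Proof.
move=> hJ; rewrite -[J]trmxK frob2_mulr_orth // trmxK; exact: orth_sq.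
Qed.

Section Z.
Variables (p d : nat) (Y : 'M[R]_(p, d)) (J : 'M[R]_d) (c : 'rV[R]_d) (sg : R).
Hypotheses (hY : Y^T *m Y = 1%:M) (hJ : J^T *m J = 1%:M) (hc : forall j, c 0 j ^+ 2 <= sg) (s0 : 0 <= sg).
Let Z := Y *m diag_mx c *m J^T.

Lemma L1 k (X : 'M[R]_(k, d)) : frob2 (X *m Z^T) <= sg * frob2 X.
Proof.
rewrite /Z !trmx_mul trmxK tr_diag_mx !mulmxA frob2_mulr_orth //.
by rewrite -(frob2_mulr_sq X hJ) frob2_diag.
Qed.

Lemma L2 k (X : 'M[R]_(k, d)) : frob2 (Z *m X^T) <= sg * frob2 X.
Proof. by rewrite -frob2_tr trmx_mul trmxK L1. Qed.

Lemma L3 (X : 'M[R]_(p, d)) : frob2 (X^T *m Z) <= sg * frob2 X.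
Proof.
rewrite /Z !mulmxA frob2_mulr_orth //.
apply: (le_trans (frob2_diag _ hc)).
by rewrite ler_wpM2l // -frob2_tr trmx_mul trmxK frob2_proj.
Qed.

Lemma L4 (X : 'M[R]_(p, d)) : frob2 (Z^T *m X) <= sg * frob2 X.
Proof. by rewrite -frob2_tr trmx_mul trmxK L3. Qed.

End Z.

Lemma vmax_ge n (v : 'rV[R]_n) j : v 0 j <= vmax v.
Proof. by rewrite /vmax (bigD1 j) //= le_max lexx. Qed.

Lemma vmax_ge0 n (v : 'rV[R]_n) : 0 <= vmax v.
Proof. by rewrite /vmax; elim/big_rec: _ => // i x _ hx; rewrite le_max hx orbT. Qed.

End Frob.
Theorem lemma2 (R : rcfType) (p d : nat)
  (Sigma : 'M[R]_d) (W : 'M[R]_d) (lam : 'rV[R]_d)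
  (M : 'M[R]_(p, d)) (Omega : 'M[R]_p)
  (U : 'M[R]_(p, d)) (g : 'rV[R]_d) (V : 'M[R]_d)
  (th th_s : 'M[R]_(p, d) * 'M[R]_d) :
  (* Sigma full-rank covariance, given by its eigendecomposition *)
  orthonormal_cols W ->
  (forall i, 0 < lam 0 i) ->
  Sigma = W *m diag_mx lam *m W^T ->
  (* Omega is a covariance matrix *)
  psd_sym Omega ->
  (d <= p)%N ->
  let Sh := mx_sqrt_eig W lam in
  \rank (M *m Sh) = d ->
  (* thin SVD of M Sigma^{1/2} *)
  orthonormal_cols U -> orthonormal_cols V -> (forall i, 0 <= g 0 i) ->
  M *m Sh = U *m diag_mx g *m V^T ->
  let Q := Qobj Sigma Sh M Omega in
  forall Qstar : R,
  (forall A1 B1, Qstar <= Q A1 B1) -> (exists A1 B1, Q A1 B1 = Qstar) ->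
  let opS := vmax lam in
  let kappa := vmax lam / vmin lam in
  let K0 := 2 * vmin g * vmin lam in
  let K1 := 2 * vmax g * vmax lam in
  let eps0 := Num.min 1 (Num.min (Num.sqrt K0 / Num.sqrt (3 * K1 * opS))
                                 (Num.sqrt (Num.sqrt (K0 / 2)) / Num.sqrt opS)) in
  let beta := (14 + 7 * kappa ^+ 2) * K1 ^+ 2 + 21 * opS ^+ 2 * K1 + 7 * opS ^+ 4 in
  (* th_s is a P-norm projection of th onto S *)
  Sset Sh U g V th_s.1 th_s.2 ->
  (forall A1 B1, Sset Sh U g V A1 B1 ->
     Pnorm2 Sigma (th.1 - th_s.1) (th.2 - th_s.2) <= Pnorm2 Sigma (th.1 - A1) (th.2 - B1)) ->
  (* th is eps0-close to S *)
  Num.sqrt (Pnorm2 Sigma (th.1 - th_s.1) (th.2 - th_s.2)) <= eps0 ->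
  Q th.1 th.2 - Qstar <= Num.sqrt beta / 2 * Pnorm2 Sigma (th.1 - th_s.1) (th.2 - th_s.2).

Proof.
move=> hW hlam hSig hOm hdp Sh hrank hU hV hg hMSh Q Qstar hQmin hQex opS kappa K0 K1 eps0 beta hS hproj hclose.
have WWT : W *m W^T = 1%:M by exact: orth_sq.
set Dl := diag_mx (map_mx Num.sqrt lam).
have ShE : Sh = W *m Dl *m W^T by [].
have ShT : Sh^T = Sh by rewrite ShE !trmx_mul trmxK tr_diag_mx mulmxA.
have DlDl : Dl *m Dl = diag_mx lam.
  rewrite /Dl mulmx_diag; congr diag_mx; apply/rowP => j; rewrite !mxE -expr2 sqr_sqrtr //.
  exact: ltW.
have ShSh : Sh *m Sh = Sigma.
  by rewrite hSig ShE !mulmxA -(mulmxA _ W^T W) hW mulmx1 -(mulmxA _ Dl Dl) DlDl.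
have hShu : Sh \in unitmx.
  set Di := diag_mx (map_mx (fun x => (Num.sqrt x)^-1) lam).
  have DlDi : Dl *m Di = 1%:M.
    rewrite /Dl /Di mulmx_diag -diag_const_mx; congr diag_mx; apply/rowP => j.
    rewrite !mxE mulfV //; apply: lt0r_neq0; rewrite sqrtr_gt0; exact: hlam.
  have : Sh *m (W *m Di *m W^T) = 1%:M.
    by rewrite ShE !mulmxA -(mulmxA _ W^T W) hW mulmx1 -(mulmxA _ Dl Di) DlDi mulmx1.
  by case/mulmx1_unit.
have ShiSh : invmx Sh *m Sh = 1%:M by exact: mulVmx.
have ShShi : Sh *m invmx Sh = 1%:M by exact: mulmxV.
clearbody Sh.
move: hS; rewrite /Sset /=; case=> J [hJ [eA eB]].
set Gh := diag_mx (map_mx Num.sqrt g) in eA eB.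
have GhT : Gh^T = Gh by rewrite tr_diag_mx.
have GhGh : Gh *m Gh = diag_mx g.
  rewrite /Gh mulmx_diag; congr diag_mx; apply/rowP => j; rewrite !mxE -expr2 sqr_sqrtr //.
have JJT : J *m J^T = 1%:M by exact: orth_sq.
set dA := th.1 - th_s.1. set dB := th.2 - th_s.2.
set xs := U *m Gh *m J^T. set ys := V *m Gh *m J^T.
set u := dA *m Sh. set v := Sh *m dB *m Sh.
have xsE : th_s.1 *m Sh = xs.
  by rewrite eA -mulmxA mulVmx // mulmx1.
have ysE : Sh *m th_s.2 *m Sh = ys.
  by rewrite eB !mulmxA ShShi mul1mx -(mulmxA _ (invmx Sh) Sh) ShiSh mulmx1.
have hx : th.1 *m Sh = xs + u by rewrite /u /dA mulmxBl xsE addrC subrK.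
have hy : Sh *m th.2 *m Sh = ys + v by rewrite /v /dB mulmxBr mulmxBl ysE addrC subrK.
have PE : Pnorm2 Sigma dA dB = frob2 dA + frob2 (Sh *m dB).
  rewrite /Pnorm2 /Pmat tr_col_mx mul_row_block mul_row_col !mulmx1 !mulmx0 addr0 add0r.
  by rewrite mxtraceD /frob2 trmx_mul ShT !mulmxA -(mulmxA _ Sh Sh) ShSh.
have xys : xs *m ys^T = M *m Sh.
  rewrite hMSh /xs /ys !trmx_mul trmxK GhT !mulmxA -(mulmxA _ J^T J) hJ mulmx1.
  by rewrite -(mulmxA _ Gh Gh) GhGh.
have xxyy : xs^T *m xs = ys^T *m ys.
  rewrite /xs /ys !trmx_mul trmxK GhT !mulmxA -(mulmxA _ U^T U) hU mulmx1.
  by rewrite -(mulmxA _ V^T V) hV mulmx1.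
have E1E : th.1 *m Sigma *m th.2^T *m Sh - M *m Sh = u *m ys^T + xs *m v^T + u *m v^T.
  have -> : th.1 *m Sigma *m th.2^T *m Sh = (th.1 *m Sh) *m (Sh *m th.2 *m Sh)^T.
    by rewrite !trmx_mul ShT -ShSh !mulmxA.
  by rewrite hx hy -xys linearD /= mulmxDl !mulmxDr ag1.
have E2E : Sh *m (th.1^T *m th.1 - th.2^T *m Sigma *m th.2) *m Sh =
    (xs^T *m u + u^T *m xs + u^T *m u) - (ys^T *m v + v^T *m ys + v^T *m v).
  have -> : Sh *m (th.1^T *m th.1 - th.2^T *m Sigma *m th.2) *m Sh =
      (th.1 *m Sh)^T *m (th.1 *m Sh) - (Sh *m th.2 *m Sh)^T *m (Sh *m th.2 *m Sh).
    by rewrite mulmxBr mulmxBl !trmx_mul ShT -ShSh !mulmxA.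
  by rewrite hx hy [(xs + u)^T]linearD [(ys + v)^T]linearD /= !mulmxDl !mulmxDr xxyy ag2.
have opS0 : 0 <= opS by exact: vmax_ge0.
set sg := vmax g.
have sg0 : 0 <= sg by exact: vmax_ge0.
have hcg : forall j, (map_mx Num.sqrt g) 0 j ^+ 2 <= sg.
  by move=> j; rewrite mxE sqr_sqrtr //; exact: vmax_ge.
have hcl : forall j, (map_mx Num.sqrt lam) 0 j ^+ 2 <= opS.
  by move=> j; rewrite mxE sqr_sqrtr ?vmax_ge // ltW.
have hSh : forall k (X : 'M[R]_(k, d)), frob2 (X *m Sh) <= opS * frob2 X.
  by move=> k X; rewrite -{1}ShT ShE; exact: (L1 hW hW hcl).
set s := Num.sqrt sg. set a := nrm u. set b := nrm v.
have s0 : 0 <= s by exact: sqrtr_ge0.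
have a0 : 0 <= a by exact: nrm_ge0.
have b0 : 0 <= b by exact: nrm_ge0.
have fa : frob2 u = a ^+ 2 by rewrite nrm_sq.
have fb : frob2 v = b ^+ 2 by rewrite nrm_sq.
have n1 : nrm (u *m ys^T) <= s * a by apply: nrm_le => //; exact: (L1 hV hJ hcg).
have n2 : nrm (xs *m v^T) <= s * b by apply: nrm_le => //; exact: (L2 hU hJ hcg).
have n3 : nrm (u *m v^T) <= a * b.
  by apply: nrm_le; [exact: frob2_ge0 | rewrite -(frob2_tr v); exact: frob2_mul].
have n4 : nrm (xs^T *m u) <= s * a by apply: nrm_le => //; exact: (L4 hU hJ hcg sg0).
have n5 : nrm (u^T *m xs) <= s * a by apply: nrm_le => //; exact: (L3 hU hJ hcg sg0).
have n6 : nrm (u^T *m u) <= a ^+ 2.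
  rewrite expr2; apply: nrm_le; [exact: frob2_ge0 | rewrite -{1}(frob2_tr u); exact: frob2_mul].
have m4 : nrm (ys^T *m v) <= s * b by apply: nrm_le => //; exact: (L4 hV hJ hcg sg0).
have m5 : nrm (v^T *m ys) <= s * b by apply: nrm_le => //; exact: (L3 hV hJ hcg sg0).
have m6 : nrm (v^T *m v) <= b ^+ 2.
  rewrite expr2; apply: nrm_le; [exact: frob2_ge0 | rewrite -{1}(frob2_tr v); exact: frob2_mul].
set E1 := u *m ys^T + xs *m v^T + u *m v^T.
set E2 := (xs^T *m u + u^T *m xs + u^T *m u) - (ys^T *m v + v^T *m ys + v^T *m v).
have nE1 : nrm E1 <= s * a + s * b + a * b.
  apply: (le_trans (nrmD _ _)); apply: lerD => //.
  by apply: (le_trans (nrmD _ _)); apply: lerD.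
have nE2 : nrm E2 <= (s * a + s * a + a ^+ 2) + (s * b + s * b + b ^+ 2).
  apply: (le_trans (nrmB _ _)); apply: lerD.
    apply: (le_trans (nrmD _ _)); apply: lerD => //.
    by apply: (le_trans (nrmD _ _)); apply: lerD.
  apply: (le_trans (nrmD _ _)); apply: lerD => //.
  by apply: (le_trans (nrmD _ _)); apply: lerD.
have QE : Q th.1 th.2 = 2^-1 * \tr Omega + 2^-1 * frob2 E1 + 8^-1 * frob2 E2.
  by rewrite /Q /Qobj /Lpop /Rreg E1E E2E.
have Qs : 2^-1 * \tr Omega <= Qstar.
  case: hQex => A1 [B1 <-]; rewrite /Q /Qobj /Lpop /Rreg -addrA lerDl.
  by apply: addr_ge0; apply: mulr_ge0; rewrite ?invr_ge0 ?frob2_ge0.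
have hfa : a ^+ 2 <= opS * frob2 dA by rewrite -fa; exact: hSh.
have hfb : b ^+ 2 <= opS * frob2 (Sh *m dB) by rewrite -fb; exact: hSh.
have hD1 : frob2 dA + frob2 (Sh *m dB) <= 1.
  have e1 : eps0 <= 1 by rewrite /eps0 ge_min lexx.
  by have h := le_trans hclose e1; rewrite -sqrtr1 ler_sqrt // PE in h.
have fin := final_ineq sg0 (sqr_sqrtr sg0) s0 a0 b0 opS0 (frob2_ge0 dA) (frob2_ge0 (Sh *m dB))
   hfa hfb hD1 (erefl K1) (erefl beta).
have sq1 : frob2 E1 <= (s * a + s * b + a * b) ^+ 2.
  by rewrite -nrm_sq ler_pXn2r // nnegrE ?nrm_ge0 // (le_trans (nrm_ge0 _) nE1).
have sq2 : frob2 E2 <= ((s * a + s * a + a ^+ 2) + (s * b + s * b + b ^+ 2)) ^+ 2.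
  by rewrite -nrm_sq ler_pXn2r // nnegrE ?nrm_ge0 // (le_trans (nrm_ge0 _) nE2).
rewrite -/s in fin; rewrite PE QE; lra.
Qed.
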